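(* With the notation of the context, the POVM $\{E_j\}_{j\in A}$ (on the support of $\Sigma=\sum_j\sigma_j$, completed arbitrarily on its orthogonal complement) maximizes the average success probability $\frac{1}{|A|}\sum_{j\in A}\mathrm{tr}(F_j\sigma_j)$ over all POVMs $\{F_j\}_{j\in A}$ for distinguishing the equiprobable states $\{\sigma_j\}_{j\in A}$.
   Context: $A$ finite abelian group, $p$ prime, $\varphi\in\mathrm{Aut}(A)$ with $\varphi^p=\mathrm{id}$, $|G|:=p|A|$, $k\ge1$. $\{\chi_x\}_{x\in A}$ are the characters of $A$ with $\chi_x\chi_{x'}=\chi_{x+x'}$, $\chi_x(y)=\chi_y(x)$. For $b\in\{0,\dots,p-1\}$, $\Phi_b:=\sum_{i=0}^{b-1}\varphi^i$ and $\hat\Phi_b:A\to A$ is a function with $\chi_x(\Phi_b(d))=\chi_{\hat\Phi_b(x)}(d)$ for all $x,d$. For $x\in A^k$, $b\in\mathbb{Z}_p^k$: $\hat\Phi_b(x):=\sum_j\hat\Phi_{b_j}(x_j)$, $S^x_w:=\{b:\hat\Phi_b(x)=w\}$, $\eta^x_w:=|S^x_w|$, $|S^x_w\rangle$ the normalized uniform superposition over $S^x_w$ (zero if empty). $\sigma_d:=\frac{1}{|G|^k}\sum_{x}\sum_{w,v}\chi_w(d)\overline{\chi_v(d)}\sqrt{\eta^x_w\eta^x_v}|x,S^x_w\rangle\langle x,S^x_v|$ and $E_j:=\frac{1}{|A|}\sum_x\sum_{w,v}\chi_w(j)\overline{\chi_v(j)}|x,S^x_w\rangle\langle x,S^x_v|$.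 *)

(* Defs.v *)
From HB Require Import structures.
From mathcomp Require Import all_boot all_order all_algebra all_field.
Set Implicit Arguments.
Unset Strict Implicit.
Unset Printing Implicit Defensive.
Import GRing.Theory Num.Theory.
Local Open Scope ring_scope.

Section QDefs.
Variables (A : finZmodType) (p k : nat).

(* basis index of the Hilbert space: pairs (x, b), x in A^k, b in Z_p^k *)
Definition idxT := ({ffun 'I_k -> A} * {ffun 'I_k -> 'I_p})%type.
Definition dimH := #|{: idxT}|.
Definition opH := 'M[algC]_dimH.

Definition is_character (psi : A -> algC) : Prop :=
  psi 0 = 1 /\ forall y z, psi (y + z) = psi y * psi z.

Definition Phi (phi : A -> A) (b : nat) (d : A) : A := \sum_(i < b) iter i phi d.

Definition Phihat_vec (Phihat : nat -> A -> A)
  (b : {ffun 'I_k -> 'I_p}) (x : {ffun 'I_k -> A}) : A :=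
  \sum_(j < k) Phihat (nat_of_ord (b j)) (x j).

Definition Sset Phihat (x : {ffun 'I_k -> A}) (w : A) : {set {ffun 'I_k -> 'I_p}} :=
  [set b | Phihat_vec Phihat b x == w].

Definition eta Phihat x w : nat := #|Sset Phihat x w|.

(* the vector |x, S^x_w> (normalized uniform superposition; zero if S^x_w is empty) *)
Definition ket Phihat (x : {ffun 'I_k -> A}) (w : A) (t : idxT) : algC :=
  if (t.1 == x) && (t.2 \in Sset Phihat x w)
  then (sqrtC (eta Phihat x w)%:R)^-1 else 0.

Definition outer (u v : idxT -> algC) : opH :=
  \matrix_(i, j) (u (enum_val i) * (v (enum_val j))^*).

Definition sigma (chi : A -> A -> algC) Phihat (d : A) : opH :=
  ((p * #|A|) ^ k)%:R^-1 *:
  \sum_(x : {ffun 'I_k -> A}) \sum_(w : A) \sum_(v : A)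
     ((chi w d * (chi v d)^* * sqrtC (eta Phihat x w * eta Phihat x v)%:R)
        *: outer (ket Phihat x w) (ket Phihat x v)).

Definition Eop (chi : A -> A -> algC) Phihat (j : A) : opH :=
  (#|A|%:R)^-1 *:
  \sum_(x : {ffun 'I_k -> A}) \sum_(w : A) \sum_(v : A)
     ((chi w j * (chi v j)^*) *: outer (ket Phihat x w) (ket Phihat x v)).

Definition adjmx (M : opH) : opH := (map_mx (fun z : algC => z^*) M)^T.

Definition psd (M : opH) : Prop :=
  forall v : 'cV[algC]_dimH, 0 <= ((map_mx (fun z : algC => z^*) v)^T *m M *m v) 0 0.

Definition povm (F : A -> opH) : Prop :=
  (forall j, psd (F j)) /\ \sum_(j : A) F j = 1%:M.

Definition avg_success (F sig : A -> opH) : algC :=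
  (#|A|%:R)^-1 * \sum_(j : A) \tr (F j *m sig j).

Definition orth_proj_onto_range (P S : opH) : Prop :=
  P *m P = P /\ adjmx P = P /\ (P^T == S^T)%MS.

End QDefs.

(* Main.v *)
Require Import Defs.
From HB Require Import structures.
From mathcomp Require Import all_boot all_order all_algebra all_field all_fingroup all_solvable.
From mathcomp Require Import ring.
From Stdlib Require Import FunctionalExtensionality.
Import Order.TTheory GRing.Theory Num.Theory.
Local Open Scope ring_scope.
Set Implicit Arguments.
Unset Strict Implicit.


Section Lin.
Variables (A : finZmodType) (p k : nat).
Local Notation T := (idxT A p k).
Local Notation n := (dimH A p k).
Local Notation op := (opH A p k).

Definition ev (i : 'I_n) : T := enum_val i.
Definition dot (u v : T -> algC) : algC := \sum_(i < n) (u (ev i))^* * v (ev i).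
Definition bil (M : op) (u v : T -> algC) : algC :=
  \sum_(i < n) \sum_(j < n) (u (ev i))^* * M i j * v (ev j).

Lemma outerE (u v : T -> algC) i j : outer u v i j = u (ev i) * (v (ev j))^*.
Proof. by rewrite mxE. Qed.

Lemma tr_outer (M : op) a b : \tr (M *m outer a b) = bil M b a.
Proof.
rewrite /mxtrace /bil; apply: eq_bigr => i _; rewrite mxE.
by apply: eq_bigr => j _; rewrite outerE; ring.
Qed.

Lemma bil_outer a b u v : bil (outer a b) u v = dot u a * dot b v.
Proof.
rewrite /bil /dot big_distrl; apply: eq_bigr => i _; rewrite big_distrr.
by apply: eq_bigr => j _; rewrite outerE /=; ring.
Qed.

Lemma bilD M N u v : bil (M + N) u v = bil M u v + bil N u v.
Proof.
rewrite /bil -big_split; apply: eq_bigr => i _; rewrite -big_split.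
by apply: eq_bigr => j _; rewrite mxE /=; ring.
Qed.

Lemma bilZ c M u v : bil (c *: M) u v = c * bil M u v.
Proof.
rewrite /bil big_distrr; apply: eq_bigr => i _; rewrite big_distrr.
by apply: eq_bigr => j _; rewrite mxE /= !mulrA (mulrC _ c).
Qed.

Lemma bil_sum (I : finType) (F : I -> op) u v :
  bil (\sum_l F l) u v = \sum_l bil (F l) u v.
Proof.
rewrite /bil [RHS]exchange_big; apply: eq_bigr => i _; rewrite [RHS]exchange_big.
apply: eq_bigr => j _; rewrite summxE big_distrr big_distrl.
by apply: eq_bigr.
Qed.

Lemma bil1 u v : bil 1%:M u v = dot u v.
Proof.
rewrite /bil /dot; apply: eq_bigr => i _.
rewrite (bigD1 i) //= big1 => [|j nji]; last by rewrite mxE eq_sym (negPf nji) mulr0 mul0r.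
by rewrite mxE eqxx mulr1 addr0.
Qed.

Lemma dot_conj u v : (dot u v)^* = dot v u.
Proof.
rewrite /dot rmorph_sum; apply: eq_bigr => i _.
by rewrite rmorphM /= mulrC; congr (_ * _); apply: conjCK.
Qed.

Lemma bil_ext M u u' v v' : (forall t, u t = u' t) -> (forall t, v t = v' t) ->
  bil M u v = bil M u' v'.
Proof.
move=> hu hv; rewrite /bil; apply: eq_bigr => i _; apply: eq_bigr => j _.
by rewrite hu hv.
Qed.

Lemma bil_lin (I J : finType) M (c : I -> algC) (d : J -> algC) u v :
  bil M (fun t => \sum_a c a * u a t) (fun t => \sum_b d b * v b t)
  = \sum_a \sum_b (c a)^* * d b * bil M (u a) (v b).
Proof.
rewrite /bil.
transitivity (\sum_i \sum_j \sum_a \sum_b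
   (c a)^* * d b * ((u a (ev i))^* * M i j * v b (ev j))).
  apply: eq_bigr => i _; apply: eq_bigr => j _.
  rewrite rmorph_sum big_distrl big_distrl; apply: eq_bigr => a _.
  rewrite big_distrr; apply: eq_bigr => b _ /=.
  by rewrite rmorphM; ring.
symmetry.
transitivity (\sum_a \sum_b \sum_i \sum_j
   (c a)^* * d b * ((u a (ev i))^* * M i j * v b (ev j))).
  apply: eq_bigr => a _; apply: eq_bigr => b _.
  rewrite big_distrr; apply: eq_bigr => i _; rewrite big_distrr.
  by apply: eq_bigr => j _.
under eq_bigr do rewrite exchange_big.
rewrite exchange_big; apply: eq_bigr => i _.
under eq_bigr do rewrite exchange_big.
by rewrite exchange_big.
Qed.

Lemma psd_bil M : psd M <-> forall u, 0 <= bil M u u.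
Proof.
have E v : ((map_mx (fun z : algC => z^*) v)^T *m M *m v) 0 0 =
           bil M (fun t => v (enum_rank t) 0) (fun t => v (enum_rank t) 0).
  rewrite mxE /bil exchange_big; apply: eq_bigr => j _.
  rewrite mxE big_distrl; apply: eq_bigr => i _.
  by rewrite !mxE /ev !enum_valK.
split=> [h u | h v]; last by rewrite E.
have := h (\col_i u (ev i)); rewrite E.
by rewrite (@bil_ext M _ u _ u) // => t; rewrite mxE /ev enum_rankK.
Qed.

Lemma cs_bil M (I : finType) (g : I -> algC) (u : I -> T -> algC) :
  (forall v, 0 <= bil M v v) ->
  bil M (fun t => \sum_i g i * u i t) (fun t => \sum_i g i * u i t)
   <= (\sum_i g i * (g i)^*) * \sum_i bil M (u i) (u i).
Proof.
move=> hM; rewrite bil_lin.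
set G := fun a b => bil M (u a) (u b).
set Y := fun a b => g b * (g b)^* * G a a - (g a)^* * g b * G a b.
have hX a b : bil M (fun t => \sum_(i : bool) (if i then (g b)^* else - (g a)^*) *
                      (if i then u a else u b) t)
                    (fun t => \sum_(i : bool) (if i then (g b)^* else - (g a)^*) *
                      (if i then u a else u b) t) = Y a b + Y b a.
  rewrite bil_lin !big_bool /= /Y /G.
  rewrite !rmorphN /= !conjCK; ring.
have h0 : 0 <= \sum_a \sum_b (Y a b + Y b a).
  apply: sumr_ge0 => a _; apply: sumr_ge0 => b _; rewrite -hX; exact: hM.
have h1 : \sum_a \sum_b (Y a b + Y b a) = 2 * \sum_a \sum_b Y a b.
  rewrite mulr2n mulrDl mul1r.
  transitivity (\sum_a \sum_b Y a b + \sum_a \sum_b Y b a).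
    by rewrite -big_split; apply: eq_bigr => a _; rewrite -big_split.
  by rewrite [X in _ + X = _]exchange_big.
have h2 : \sum_a \sum_b Y a b = (\sum_i g i * (g i)^*) * \sum_i bil M (u i) (u i)
     - \sum_a \sum_b (g a)^* * g b * bil M (u a) (u b).
  rewrite mulr_sumr -sumrB; apply: eq_bigr => a _.
  rewrite mulr_suml -sumrB; apply: eq_bigr => b _.
  by rewrite /Y /G mulrC.
rewrite h1 h2 pmulr_rge0 ?subr_ge0 in h0 => //.
Qed.

End Lin.



Section Chi.
Variables (A : finZmodType) (chi : A -> A -> algC).
Hypothesis Hchar : forall x, is_character (chi x).
Hypothesis Hinj : injective chi.
Hypothesis Hadd : forall x x' y, chi (x + x') y = chi x y * chi x' y.
Hypothesis Hsym : forall x y, chi x y = chi y x.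

Lemma chi0r x : chi x 0 = 1. Proof. by case: (Hchar x). Qed.
Lemma chi0l y : chi 0 y = 1. Proof. by rewrite Hsym chi0r. Qed.
Lemma chiDr x y z : chi x (y + z) = chi x y * chi x z.
Proof. by case: (Hchar x) => _ ->. Qed.

Lemma chi_mulr x y m : chi x (y *+ m) = chi x y ^+ m.
Proof.
elim: m => [|m IH]; first by rewrite mulr0n chi0r expr0.
by rewrite mulrS chiDr IH exprS.
Qed.

Lemma chi_norm x y : chi x y * (chi x y)^* = 1.
Proof.
have h1 : chi x y ^+ #|A| = 1.
  rewrite -chi_mulr -FinRing.zmodXgE.
  have := @expg_cardG _ [set: A]%G y (in_setT y).
  by rewrite cardsT => ->; rewrite chi0r.
have h2 : `|chi x y| = 1.
  apply/eqP; rewrite -(@pexpr_eq1 _ _ #|A|) ?normr_ge0 //; last first.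
    by apply/card_gt0P; exists 0.
  by rewrite -normrX h1 normr1.
by rewrite -normCK h2 expr1n.
Qed.

Lemma chi_conj x y : (chi x y)^* = chi (- x) y.
Proof.
have hn : chi x y != 0.
  by apply/eqP => h; have := chi_norm x y; rewrite h mul0r => /eqP; rewrite eq_sym oner_eq0.
apply: (mulfI hn); rewrite chi_norm -Hadd subrr chi0l //.
Qed.

Lemma chi_sum u : \sum_j chi u j = if u == 0 then #|A|%:R else 0.
Proof.
case: eqP => [->|/eqP nu].
  by under eq_bigr do rewrite chi0l; rewrite sumr_const.
have [j0 hj0] : exists j0, chi u j0 != 1.
  apply/existsP; apply: contraR nu => /existsPn h.
  apply/eqP; apply: Hinj; apply: functional_extensionality => j.
  by rewrite chi0l; have := h j; rewrite negbK => /eqP.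
have : \sum_j chi u j = chi u j0 * \sum_j chi u j.
  rewrite mulr_sumr (reindex_inj (addrI j0)) /=.
  by apply: eq_bigr => j _; rewrite chiDr.
move/eqP; rewrite -subr_eq0 -{1}(mul1r (\sum_j _)) -mulrBl mulf_eq0 subr_eq0.
by rewrite eq_sym (negPf hj0) => /eqP.
Qed.

Lemma chi_orth w v : \sum_j chi w j * (chi v j)^* = ((w == v)%:R * #|A|%:R).
Proof.
under eq_bigr do rewrite chi_conj -Hadd.
rewrite chi_sum subr_eq0; case: eqP => _; by rewrite ?mul1r ?mul0r.
Qed.

End Chi.



Section Ket.
Variables (A : finZmodType) (p k : nat) (Phihat : nat -> A -> A).
Local Notation T := (idxT A p k).
Local Notation n := (dimH A p k).
Local Notation X := {ffun 'I_k -> A}.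
Local Notation kt x w := (@ket A p k Phihat x w).
Local Notation et x w := (Defs.eta p Phihat x w).
Local Notation S x w := (Sset p Phihat x w).

Lemma sum_ev (F : T -> algC) : \sum_(i < n) F (ev i) = \sum_t F t.
Proof. by rewrite /ev -big_enum_val. Qed.

Lemma kt_eta0 x w t : et x w = 0%N -> kt x w t = 0.
Proof. by move=> h; rewrite /ket h sqrtC0 invr0; case: ifP. Qed.

Lemma kt_sq x w t : (kt x w t)^* * kt x w t =
  if (t.1 == x) && (t.2 \in S x w) then (et x w)%:R^-1 else 0.
Proof.
rewrite /ket; case: ifP => _; last by rewrite mulr0.
rewrite geC0_conj ?invr_ge0 ?sqrtC_ge0 ?ler0n // -expr2 exprVn sqrtCK //.
Qed.

Lemma kt_cross x w x' w' t : ~~ ((x == x') && (w == w')) ->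
  (kt x w t)^* * kt x' w' t = 0.
Proof.
move=> h; rewrite /ket; case: ifP => [/andP [/eqP h1 h2]|]; last by rewrite conjC0 mul0r.
case: ifP => [/andP [/eqP h1' h2']|]; last by rewrite mulr0.
have exx : x = x' by rewrite -h1 -h1'.
subst x'; move: h2 h2'; rewrite !inE => /eqP h2 /eqP h2'.
by move: h; rewrite -h2 -h2' exx !eqxx.
Qed.

Lemma dot_kt x w x' w' :
  dot (kt x w) (kt x' w') = ((x == x') && (w == w') && (0 < et x w)%N)%:R.
Proof.
rewrite /dot (sum_ev (fun t => (kt x w t)^* * kt x' w' t)).
have [hxw|hxw] := boolP ((x == x') && (w == w')); last first.
  by rewrite /= big1 // => t _; rewrite kt_cross.
case/andP: hxw => /eqP <- /eqP <-; rewrite /=.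
under eq_bigr do rewrite kt_sq.
rewrite -(pair_big xpredT xpredT (fun (a : X) b =>
   if ((a, b).1 == x) && ((a, b).2 \in S x w) then (et x w)%:R^-1 else 0)) /=.

rewrite (bigD1 x) //= [X in _ + X]big1 => [|a nax]; last first.
  by apply: big1 => b _; rewrite (negPf nax).
rewrite addr0 eqxx /= -big_mkcond sumr_const -/(Defs.eta p Phihat x w).
case: (posnP (et x w)) => [->|h]; first by rewrite mulr0n.
by rewrite -[LHS]mulr_natr mulVf // pnatr_eq0 -lt0n.
Qed.

End Ket.



Section Main.
Variables (A : finZmodType) (p k : nat) (Phihat : nat -> A -> A) (chi : A -> A -> algC).
Hypothesis Hchar : forall x, is_character (chi x).
Hypothesis Hinj : injective chi.
Hypothesis Hadd : forall x x' y, chi (x + x') y = chi x y * chi x' y.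
Hypothesis Hsym : forall x y, chi x y = chi y x.
Local Notation T := (idxT A p k).
Local Notation n := (dimH A p k).
Local Notation op := (opH A p k).
Local Notation X := {ffun 'I_k -> A}.
Local Notation kt x w := (@ket A p k Phihat x w).
Local Notation et x w := (Defs.eta p Phihat x w).

Definition lin (x : X) (a : A -> algC) : T -> algC := fun t => \sum_w a w * kt x w t.
Definition ee x j := lin x (fun w => chi w j).
Definition ss x d := lin x (fun w => chi w d * sqrtC (et x w)%:R).
Definition NN : algC := ((p * #|A|) ^ k)%:R.

Lemma outer_lin x a b :
  \sum_w \sum_v (a w * (b v)^*) *: outer (kt x w) (kt x v) = outer (lin x a) (lin x b).
Proof.
apply/matrixP => i j; rewrite summxE outerE /lin rmorph_sum big_distrl.
apply: eq_bigr => w _; rewrite summxE big_distrr; apply: eq_bigr => v _ /=.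
by rewrite !mxE rmorphM /=; ring.
Qed.

Lemma E_eq j : Eop p k chi Phihat j = #|A|%:R^-1 *: \sum_x outer (ee x j) (ee x j).
Proof. by rewrite /Eop; congr (_ *: _); apply: eq_bigr => x _; rewrite -outer_lin. Qed.

Lemma sig_eq d : sigma p k chi Phihat d = NN^-1 *: \sum_x outer (ss x d) (ss x d).
Proof.
rewrite /sigma; congr (_ *: _); apply: eq_bigr => x _; rewrite -outer_lin.
apply: eq_bigr => w _; apply: eq_bigr => v _; congr (_ *: _).
rewrite natrM sqrtCM ?nnegrE ?ler0n // rmorphM /= (@geC0_conj _ (sqrtC _)) ?sqrtC_ge0 ?ler0n //.
by rewrite !mulrA; congr (_ * _); rewrite -!mulrA; congr (_ * _); rewrite mulrC.
Qed.

Lemma dot_lin x x' a b : dot (lin x a) (lin x' b) =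
  (x == x')%:R * \sum_w (a w)^* * b w * (0 < et x w)%N%:R.
Proof.
rewrite -bil1 bil_lin mulr_sumr; apply: eq_bigr => w _.
rewrite (bigD1 w) //= big1 => [|v nvw]; last by rewrite bil1 dot_kt [w == v]eq_sym (negPf nvw) /= andbF mulr0.
rewrite addr0 bil1 dot_kt eqxx /=; case: (x == x') => /=; ring.
Qed.

Lemma bil_outer_sum (c : algC) (f : X -> T -> algC) u :
  bil (c *: \sum_x outer (f x) (f x)) u u = c * \sum_x dot u (f x) * (dot u (f x))^*.
Proof.
rewrite bilZ bil_sum; congr (_ * _); apply: eq_bigr => x _.
by rewrite bil_outer dot_conj.
Qed.

Lemma psd_E j : psd (Eop p k chi Phihat j).
Proof.
apply/psd_bil => u; rewrite E_eq bil_outer_sum mulr_ge0 ?invr_ge0 ?ler0n //.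
by apply: sumr_ge0 => x _; apply: mul_conjC_ge0.
Qed.

Definition Dm (l : X -> A -> algC) : op :=
  \sum_x \sum_w l x w *: outer (kt x w) (kt x w).

Lemma outer_mul (a b c d : T -> algC) :
  outer a b *m outer c d = dot b c *: outer a d.
Proof.
apply/matrixP => i j; rewrite !mxE /dot big_distrl.
by apply: eq_bigr => l _ /=; rewrite !mxE; ring.
Qed.

Lemma Dm_mul l m : Dm l *m Dm m = Dm (fun x w => l x w * m x w).
Proof.
rewrite /Dm mulmx_suml; apply: eq_bigr => x _.
rewrite mulmx_suml; apply: eq_bigr => w _.
rewrite mulmx_sumr (bigD1 x) //= [X in _ + X]big1 => [|x' nx]; last first.
  rewrite mulmx_sumr big1 // => v _.
  by rewrite -scalemxAl -scalemxAr outer_mul dot_kt [x == x']eq_sym (negPf nx) /= ?mulr0n scale0r !scaler0.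
rewrite addr0 mulmx_sumr (bigD1 w) //= [X in _ + X]big1 => [|v nv]; last first.
  by rewrite -scalemxAl -scalemxAr outer_mul dot_kt eqxx [w == v]eq_sym (negPf nv) /= ?andbF ?mulr0n scale0r !scaler0.
rewrite addr0 -scalemxAl -scalemxAr outer_mul dot_kt !eqxx /= scalerA.
case: (posnP (et x w)) => [h|h]; last by rewrite scale1r.
have -> : outer (kt x w) (kt x w) = 0.
  by apply/matrixP => i j; rewrite !mxE kt_eta0 // mul0r.
by rewrite !scaler0.
Qed.

Lemma Dm_ext l m : (forall x w, (0 < et x w)%N -> l x w = m x w) -> Dm l = Dm m.
Proof.
move=> h; apply: eq_bigr => x _; apply: eq_bigr => w _.
case: (posnP (et x w)) => [h0|h0]; last by rewrite h.
have -> : outer (kt x w) (kt x w) = 0.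
  by apply/matrixP => i j; rewrite !mxE kt_eta0 // mul0r.
by rewrite !scaler0.
Qed.

Lemma adj_Dm1 : adjmx (Dm (fun _ _ => 1)) = Dm (fun _ _ => 1).
Proof.
apply/matrixP => i j; rewrite !mxE /Dm !summxE rmorph_sum; apply: eq_bigr => x _.
rewrite !summxE rmorph_sum; apply: eq_bigr => w _.
by rewrite !mxE !mul1r /= rmorphM /= conjCK mulrC.
Qed.

Lemma swap3 (c : algC) (f : A -> X -> A -> A -> algC) (O : X -> A -> A -> op) :
  \sum_j c *: (\sum_x \sum_w \sum_v f j x w v *: O x w v) =
  c *: \sum_x \sum_w \sum_v (\sum_j f j x w v) *: O x w v.
Proof.
rewrite -scaler_sumr; congr (_ *: _).
rewrite exchange_big; apply: eq_bigr => x _.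
rewrite exchange_big; apply: eq_bigr => w _.
rewrite exchange_big; apply: eq_bigr => v _.
by rewrite scaler_suml.
Qed.

Lemma collapse (w : A) (g : A -> algC) (O : A -> op) :
  \sum_v ((w == v)%:R * g v) *: O v = g w *: O w.
Proof.
rewrite (bigD1 w) //= [X in _ + X]big1 => [|v nv]; last first.
  by rewrite eq_sym (negPf nv) mul0r scale0r.
by rewrite eqxx mul1r addr0.
Qed.

Lemma sumE : \sum_j Eop p k chi Phihat j = Dm (fun _ _ => 1).
Proof.
rewrite /Eop swap3 /Dm scaler_sumr; apply: eq_bigr => x _.
rewrite scaler_sumr; apply: eq_bigr => w _.
under eq_bigr do rewrite (chi_orth Hchar Hinj Hadd Hsym).
by rewrite collapse scalerA mulVf // pnatr_eq0 -lt0n; apply/card_gt0P; exists 0.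
Qed.

Lemma sumS : \sum_d sigma p k chi Phihat d =
  Dm (fun x w => NN^-1 * #|A|%:R * (et x w)%:R).
Proof.
rewrite /sigma swap3 /Dm scaler_sumr; apply: eq_bigr => x _.
rewrite scaler_sumr; apply: eq_bigr => w _.
under eq_bigr do rewrite -big_distrl /= (chi_orth Hchar Hinj Hadd Hsym) -mulrA.
rewrite collapse scalerA natrM -expr2 sqrCK ?ler0n //.
by rewrite /NN mulrA.
Qed.

Lemma orth_part : (0 < p)%N ->
  orth_proj_onto_range (\sum_j Eop p k chi Phihat j) (\sum_j sigma p k chi Phihat j).
Proof.
move=> hp; rewrite sumE sumS.
have hA : (0 < #|A|)%N by apply/card_gt0P; exists 0.
have hN : NN != 0 by rewrite /NN pnatr_eq0 -lt0n expn_gt0 muln_gt0 hp hA.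
set ls := fun x w => NN^-1 * #|A|%:R * (et x w)%:R.
have hPS : Dm (fun _ _ => 1) = Dm ls *m Dm (fun x w => (ls x w)^-1).
  rewrite Dm_mul; apply: Dm_ext => x w hw; rewrite mulfV // /ls.
  by rewrite !mulf_neq0 ?invr_eq0 // pnatr_eq0 -lt0n.
have hSP : Dm ls = Dm (fun _ _ => 1) *m Dm ls.
  by rewrite Dm_mul; apply: Dm_ext => x w _; rewrite mul1r.
split; [|split].
- by rewrite Dm_mul; apply: Dm_ext => x w _; rewrite mulr1.
- exact: adj_Dm1.
- apply/andP; split.
  + by rewrite {1}hPS trmx_mul submxMl.
  + by rewrite {1}hSP trmx_mul submxMl.
Qed.

Lemma tr_sig F d : \tr (F *m sigma p k chi Phihat d) =
  NN^-1 * \sum_x bil F (ss x d) (ss x d).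
Proof.
rewrite sig_eq -scalemxAr mxtraceZ mulmx_sumr raddf_sum; congr (_ * _).
by apply: eq_bigr => x _; rewrite -tr_outer.
Qed.

Definition Rx (x : X) : algC := \sum_w sqrtC (et x w)%:R.

Lemma Rx_ge0 x : 0 <= Rx x.
Proof. by apply: sumr_ge0 => w _; rewrite sqrtC_ge0 ler0n. Qed.

Lemma sqrt_ind (x : X) w : sqrtC ((et x w)%:R : algC) * (0 < et x w)%N%:R = sqrtC (et x w)%:R.
Proof. by case: (posnP (et x w)) => [->|h]; rewrite ?sqrtC0 ?mul0r ?mulr1. Qed.

Lemma dot_se x x' j : dot (ss x j) (ee x' j) = (x == x')%:R * Rx x.
Proof.
rewrite dot_lin; congr (_ * _); apply: eq_bigr => w _.
rewrite rmorphM /= (@geC0_conj _ (sqrtC _)) ?sqrtC_ge0 ?ler0n //.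
by rewrite -[RHS]sqrt_ind -[RHS]mul1r -(chi_norm Hchar w j); ring.
Qed.

Lemma bil_E_ss j x : bil (Eop p k chi Phihat j) (ss x j) (ss x j) = #|A|%:R^-1 * Rx x ^+ 2.
Proof.
rewrite E_eq bil_outer_sum; congr (_ * _).
rewrite (bigD1 x) //= [X in _ + X]big1 => [|x' nx]; last first.
  by rewrite dot_se eq_sym (negPf nx) mul0r mul0r.
by rewrite addr0 dot_se eqxx mul1r (geC0_conj (Rx_ge0 x)) expr2.
Qed.

Lemma avgE : avg_success (Eop p k chi Phihat) (sigma p k chi Phihat) =
  #|A|%:R^-1 * (NN^-1 * \sum_x Rx x ^+ 2).
Proof.
rewrite /avg_success; congr (_ * _).
under eq_bigr do rewrite tr_sig.
under eq_bigr do under eq_bigr do rewrite bil_E_ss.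
under eq_bigr do rewrite -mulr_sumr mulrCA.
rewrite sumr_const (_ : #|xpredT| = #|A|) // -[LHS]mulr_natl mulVKf //.
by rewrite pnatr_eq0 -lt0n; apply/card_gt0P; exists 0.
Qed.

Lemma avg_add (E G : A -> op) sig :
  avg_success (fun j => E j + G j) sig = avg_success E sig + avg_success G sig.
Proof.
rewrite /avg_success -mulrDr -big_split; congr (_ * _); apply: eq_bigr => j _.
by rewrite mulmxDl mxtraceD.
Qed.

Lemma avg_ge0 (G : A -> op) : (forall j, psd (G j)) ->
  0 <= avg_success G (sigma p k chi Phihat).
Proof.
move=> hG; rewrite /avg_success mulr_ge0 ?invr_ge0 ?ler0n //.
apply: sumr_ge0 => j _; rewrite tr_sig mulr_ge0 ?invr_ge0 ?ler0n //.
by apply: sumr_ge0 => x _; have /psd_bil := hG j; apply.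
Qed.

Lemma bil_scale M (a b : algC) (u v : T -> algC) :
  bil M (fun t => a * u t) (fun t => b * v t) = a^* * b * bil M u v.
Proof.
rewrite /bil big_distrr; apply: eq_bigr => i _; rewrite big_distrr.
by apply: eq_bigr => j _ /=; rewrite rmorphM /=; ring.
Qed.

Lemma avgF_le F : povm F ->
  avg_success F (sigma p k chi Phihat) <= #|A|%:R^-1 * (NN^-1 * \sum_x Rx x ^+ 2).
Proof.
case=> hF hsum.
rewrite /avg_success ler_wpM2l ?invr_ge0 ?ler0n //.
pose r := fun (x : X) w => sqrtC (sqrtC ((et x w)%:R : algC)).
have hr x w : r x w * r x w = sqrtC (et x w)%:R by rewrite -expr2 sqrtCK.
have hrc x w : (r x w)^* = r x w by rewrite geC0_conj // !sqrtC_ge0 ler0n.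
have step j : \tr (F j *m sigma p k chi Phihat j) <=
    NN^-1 * \sum_x Rx x * \sum_w sqrtC (et x w)%:R * bil (F j) (kt x w) (kt x w).
  rewrite tr_sig ler_wpM2l ?invr_ge0 ?ler0n //; apply: ler_sum => x _.
  have e t : ss x j t = \sum_w (chi w j * r x w) * (r x w * kt x w t).
    by apply: eq_bigr => w _; rewrite -[sqrtC _]hr; ring.
  rewrite (bil_ext _ e e).
  have hcs := cs_bil (fun w => chi w j * r x w) (fun w t => r x w * kt x w t) ((psd_bil (F j)).1 (hF j)).
  apply: (le_trans hcs).
  rewrite le_eqVlt; apply/orP; left; apply/eqP; congr (_ * _).
    apply: eq_bigr => w _; rewrite rmorphM /= hrc mulrACA (chi_norm Hchar) mul1r hr //.
  by apply: eq_bigr => w _; rewrite bil_scale hrc hr.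
apply: le_trans (ler_sum _ (fun j _ => step j)) _.
rewrite -mulr_sumr; rewrite le_eqVlt; apply/orP; left; apply/eqP; congr (_ * _).
rewrite exchange_big; apply: eq_bigr => x _.
rewrite -mulr_sumr exchange_big /= expr2; congr (_ * _).
apply: eq_bigr => w _; rewrite -mulr_sumr -bil_sum hsum bil1 dot_kt !eqxx /=.
exact: sqrt_ind.
Qed.

End Main.


Unset Implicit Arguments.

Theorem mainTheorem7
  (A : finZmodType) (p : nat) (phi : A -> A) (k : nat)
  (chi : A -> A -> algC) (Phihat : nat -> A -> A) :
  prime p ->
  (forall y z, phi (y + z) = phi y + phi z) ->
  bijective phi ->
  (forall y, iter p phi y = y) ->
  (0 < k)%N ->
  (forall x, is_character (chi x)) ->
  injective chi ->
  (forall psi : A -> algC, is_character psi -> exists x, chi x =1 psi) ->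
  (forall x x' y, chi (x + x') y = chi x y * chi x' y) ->
  (forall x y, chi x y = chi y x) ->
  (forall b : nat, (b < p)%N -> forall x d,
       chi x (Phi phi b d) = chi (Phihat b x) d) ->
  let sig := sigma p k chi Phihat in
  let E := Eop p k chi Phihat in
  [/\ (* {E_j} is a POVM on the support of Sigma = sum_j sigma_j *)
      (forall j, psd (E j)),
      orth_proj_onto_range (\sum_(j : A) E j) (\sum_(j : A) sig j)
    & (* any completion of {E_j} on the orthogonal complement is optimal *)
      forall G : A -> opH A p k,
        (forall j, psd (G j)) ->
        \sum_(j : A) (E j + G j) = 1%:M ->
        forall F : A -> opH A p k, povm F ->
          avg_success F sig <= avg_success (fun j => E j + G j) sig].
Proof.
move=> hp _ _ _ _ Hchar Hinj _ Hadd Hsym _ sig E.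
split.
- by move=> j; apply: psd_E.
- by apply: orth_part => //; apply: prime_gt0.
- move=> G hG _ F hF; rewrite /sig /E avg_add (avgE _ _ _ Hchar).
  apply: le_trans (avgF_le _ Hchar hF) _.
  by rewrite lerDl; apply: avg_ge0.
Qed.
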